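(* Let $I\subseteq\mathbb{R}$ be an interval, let $f:I\to\mathbb{R}$ be differentiable on the interior $I^\circ$ of $I$, and let $a,b\in I$ with $a<b$ and $f'\in L^1[a,b]$. Let $s\in(0,1]$, $\alpha\in[0,1]$, $m\in(0,1]$, assume $b/m\in I^\circ$, and let $q>1$ and $p=\frac{q}{q-1}$. If $|f'|^q$ is $s$-$(\alpha,m)$-convex (in the first sense) on $[a,b]$, then $$\left|\frac{f(a)+f(b)}{2}-\frac{1}{b-a}\int_a^b f(x)\,dx\right|\le \frac{b-a}{2^{\frac{p+1}{p}}}\left[v_1|f'(a)|^q+v_2\left|f'\!\left(\frac{b}{m}\right)\right|^q\right]^{1/q},$$ where $v_1=\dfrac{1+2^{\alpha s}(\alpha s)}{2^{\alpha s}(\alpha s+1)(\alpha s+2)}$ and $v_2=m\left(\frac12-v_1\right)$.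
   Context: Let $s\in(0,1]$, $\alpha\in[0,1]$, $m\in(0,1]$. A nonnegative function $g$ is called $s$-$(\alpha,m)$-convex (in the first sense) on $[a,b]$ if for all $x,y\in[a,b]$ (with $y/m$ in the domain of $g$) and all $t\in[0,1]$, $$g(tx+(1-t)y)\le t^{\alpha s}g(x)+m\,(1-t^{\alpha s})\,g\!\left(\frac{y}{m}\right).$$ *)

(* Defs.v *)
From HB Require Import structures.
From mathcomp Require Import all_boot all_order all_algebra.
From mathcomp Require Import all_classical all_reals all_analysis.
Set Implicit Arguments. Unset Strict Implicit. Unset Printing Implicit Defensive.
Import Order.TTheory GRing.Theory Num.Theory.
Import numFieldNormedType.Exports.
Local Open Scope classical_set_scope.
Local Open Scope ring_scope.

(* s-(alpha,m)-convexity in the first sense of a nonnegative function g on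
   [a,b]; D is the domain of g (used for the side condition "y/m in the
   domain of g").  t^(alpha s) uses powR, with 0 `^ 0 = 1 and 0 `^ r = 0
   for r <> 0. *)
Definition s_alpha_m_convex {R : realType} (s alpha m : R) (D : set R)
  (g : R -> R) (a b : R) : Prop :=
  (forall x, a <= x <= b -> 0 <= g x) /\
  (forall x y t, a <= x <= b -> a <= y <= b -> D (y / m) -> 0 <= t <= 1 ->
     g (t * x + (1 - t) * y) <=
       t `^ (alpha * s) * g x + m * (1 - t `^ (alpha * s)) * g (y / m)).

(* Main.v *)
Require Import Defs.
From HB Require Import structures.
From mathcomp Require Import all_boot all_order all_algebra.
From mathcomp Require Import all_classical all_reals all_analysis.
From mathcomp Require Import ring lra.
Import Order.TTheory GRing.Theory Num.Theory.
Import numFieldNormedType.Exports.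
Local Open Scope classical_set_scope.
Local Open Scope ring_scope.

Section Helpers.
Context {R : realType}.
Implicit Types (f g : R -> R) (x : R).
Local Notation mu := (@lebesgue_measure R).
Lemma isdD {f g x df dg} : is_derive x 1 f df -> is_derive x 1 g dg ->
  is_derive x 1 (fun y => f y + g y) (df + dg).
Proof. move=> h1 h2; exact: is_deriveD. Qed.
Lemma isdB {f g x df dg} : is_derive x 1 f df -> is_derive x 1 g dg ->
  is_derive x 1 (fun y => f y - g y) (df - dg).
Proof. move=> h1 h2; exact: is_deriveB. Qed.
Lemma isdM {f g x df dg} : is_derive x 1 f df -> is_derive x 1 g dg ->
  is_derive x 1 (fun y => f y * g y) (f x * dg + g x * df).
Proof. move=> h1 h2; exact: is_deriveM. Qed.
Lemma isdZ {f x} (k : R) {df} : is_derive x 1 f df ->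
  is_derive x 1 (fun y => k * f y) (k * df).
Proof. move=> h1; exact: is_deriveZ. Qed.
Lemma isdC x (k : R) : is_derive x 1 (fun _ : R => k) 0.
Proof. exact: is_derive_cst. Qed.
Lemma isdid x : is_derive x 1 (fun y : R => y) 1.
Proof. exact: is_derive_id. Qed.
Lemma isdcomp {f g x df dg} : is_derive x 1 f df -> is_derive (f x) 1 g dg ->
  is_derive x 1 (fun y => g (f y)) (dg * df).
Proof.
move=> [h1 e1] [h2 e2]; split.
  apply/derivable1_diffP; apply: differentiable_comp; exact/derivable1_diffP.
have := derive1_comp h1 h2; rewrite !derive1E => ->.
by rewrite -e1 -e2.
Qed.
Lemma piece (f Fi G dG : R -> R) (c u v s : R) : u < v -> `|s| <= 1 ->
 (forall x, u < x < v -> derivable f x 1) ->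
 (forall x, u < x < v -> is_derive x 1 Fi (f x)) ->
 (forall x, u < x < v -> is_derive x 1 G (dG x)) ->
 (forall x, u < x < v -> `|x - c| * `|derive1 f x| <= dG x) ->
 {within `[u, v], continuous (fun x => s * ((x - c) * f x - Fi x) - G x)} ->
 s * ((v - c) * f v - Fi v) - G v <= s * ((u - c) * f u - Fi u) - G u.
Proof.
move=> uv s1 df dFi dG' bd cont.
have hd : forall x, u < x < v -> is_derive x 1 (fun x => s * ((x - c) * f x - Fi x) - G x)
   (s * (((x - c) * derive1 f x + f x * 1) - f x) - dG x).
  move=> x xi.
  apply: isdB; last exact: dG'.
  apply: isdZ; apply: isdB; last exact: dFi.
  have hf : is_derive x 1 f (derive1 f x).
    rewrite derive1E; apply: derivableP; exact: df.
  have := isdM (isdB (isdid x) (isdC x c)) hf.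
  by rewrite subr0.
apply: (ler0_derive1_nincr _ _ cont) => //.
- move=> x; rewrite in_itv /= => xi; have [] := hd x xi; done.
- move=> x; rewrite in_itv /= => xi.
  have [_ E] := hd x xi; rewrite derive1E E mulr1 addrK subr_le0.
  apply: le_trans (bd x xi).
  rewrite mulrA; apply: le_trans (ler_norm _) _.
  rewrite !normrM -mulrA; apply: ler_piMl => //; exact: mulr_ge0.
- exact: ltW.
Qed.
Lemma isd_t (b L x : R) : is_derive x 1 (fun y => (b - y) / L) (- L^-1).
Proof.
have h := isdZ (L^-1) (isdB (isdC x b) (isdid x)).
rewrite sub0r mulrN1 in h.
have -> : (fun y => (b - y) / L) = (fun y => L^-1 * (b - y)).
  by apply/funext => y; rewrite mulrC.
exact: h.
Qed.
Lemma isd_psi (b L e x : R) : 0 < L -> x < b ->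
  is_derive x 1 (fun y => ((b - y) / L) `^ e) (e * ((b - x) / L) `^ (e - 1) * (- L^-1)).
Proof.
move=> L0 xb.
apply: (isdcomp (g := fun t => t `^ e) (isd_t b L x)).
apply: is_derive1_powR.
by rewrite divr_gt0 // subr_gt0.
Qed.
Lemma psi_cont (b L e u : R) : 0 < L -> u < b -> b - L <= u -> 1 <= e ->
  {within `[u, b], continuous (fun y => ((b - y) / L) `^ e)}.
Proof.
move=> L0 ub uL e1.
apply/(continuous_within_itvP _ ub); split.
- move=> x; rewrite in_itv /= => /andP [_ xb].
  apply/differentiable_continuous; rewrite -derivable1_diffP.
  by case: (isd_psi b L e x L0 xb).
- apply: cvg_at_right_filter.
  case: (isd_psi b L e u L0 ub) => /derivable1_diffP /differentiable_continuous h _.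
  exact: h.
- rewrite subrr mul0r powR0; last by rewrite gt_eqF // (lt_le_trans ltr01).
  apply: (@squeeze_cvgr _ _ _ _ (fun=> 0) (fun y => (b - y) / L)).
  + near=> y.
    have yb : y < b by near: y; exact: nbhs_left_lt.
    have yu : u < y by near: y; exact: nbhs_left_gt.
    rewrite powR_ge0 /=.
    have t0 : 0 < (b - y) / L by rewrite divr_gt0 // subr_gt0.
    apply: ge1r_powR => //; rewrite t0 /= ler_pdivrMr // mul1r.
    by rewrite lerBlDr -lerBlDl (le_trans uL) // ltW.
  + exact: cvg_cst.
  + have : (fun y => (b - y) / L) @ b --> (b - b) / L.
      apply: cvgM; last exact: cvg_cst.
      apply: cvgB; [exact: cvg_cst | exact: cvg_id].
    rewrite subrr mul0r; exact: cvg_at_left_filter.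
Unshelve. all: by end_near. Qed.
Definition QQ (b L r a0 b0 : R) (y : R) :=
  L ^+ 2 * (a0 * (2^-1 * (((b - y) / L) * ((b - y) / L)) - 2^-1 * ((b - y) / L)) +
            b0 * ((r + 2)^-1 * ((b - y) / L) `^ (r + 2) - (2 * (r + 1))^-1 * ((b - y) / L) `^ (r + 1))).

Lemma isd_QQ (b L r a0 b0 x : R) : 0 < L -> x < b -> 0 <= r ->
  is_derive x 1 (QQ b L r a0 b0)
    (L * (2^-1 - (b - x) / L) * (a0 + b0 * ((b - x) / L) `^ r)).
Proof.
move=> L0 xb r0.
have dT := isd_t b L x.
have dP2 := isd_psi b L (r + 2) x L0 xb.
have dP1 := isd_psi b L (r + 1) x L0 xb.
rewrite /QQ.
apply: is_derive_eq.
rewrite /GRing.scale /=.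
set t := (b - x) / L.
have t0 : 0 < t by rewrite divr_gt0 // subr_gt0.
have -> : r + 2 - 1 = r + 1 by ring.
rewrite addrK.
have -> : t `^ (r + 1) = t * t `^ r.
  rewrite powRD; last by rewrite (gt_eqF t0) implybT.
  by rewrite powRr1 ?(ltW t0) // mulrC.
have r1 : r + 1 != 0 by rewrite gt_eqF // ltr_wpDl.
have r2 : r + 2 != 0 by rewrite gt_eqF // ltr_wpDl.
set P := t `^ r.
field.
by rewrite (gt_eqF L0) r1 r2.
Qed.
Lemma wcomb (u v : R) f g h (s c : R) : u < v -> {within `[u,v], continuous f} -> {within `[u,v], continuous g} ->
  {within `[u,v], continuous h} ->
  {within `[u,v], continuous (fun x => s * ((x - c) * f x - g x) - h x)}.
Proof.
move=> uv /(continuous_within_itvP _ uv) [f1 f2 f3] /(continuous_within_itvP _ uv) [g1 g2 g3]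
  /(continuous_within_itvP _ uv) [h1 h2 h3].
apply/(continuous_within_itvP _ uv); split.
- move=> x xi; apply: cvgB; last exact: h1.
  apply: cvgM; first exact: cvg_cst.
  apply: cvgB; last exact: g1.
  apply: cvgM; last exact: f1.
  apply: cvgB; [exact: cvg_id| exact: cvg_cst].
- apply: cvgB; last exact: h2.
  apply: cvgM; first exact: cvg_cst.
  apply: cvgB; last exact: g2.
  apply: cvgM; last exact: f2.
  apply: cvgB; [exact: cvg_at_right_filter cvg_id| exact: cvg_cst].
- apply: cvgB; last exact: h3.
  apply: cvgM; first exact: cvg_cst.
  apply: cvgB; last exact: g3.
  apply: cvgM; last exact: f3.
  apply: cvgB; [exact: cvg_at_left_filter cvg_id| exact: cvg_cst].
Qed.
Lemma QQ_cont (b L r a0 b0 u : R) : 0 < L -> u < b -> b - L <= u -> 0 <= r ->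
  {within `[u, b], continuous (QQ b L r a0 b0)}.
Proof.
move=> L0 ub uL r0.
apply/(continuous_within_itvP _ ub); split.
- move=> x; rewrite in_itv /= => /andP [_ xb].
  apply/differentiable_continuous; rewrite -derivable1_diffP.
  by case: (isd_QQ b L r a0 b0 x L0 xb r0).
- apply: cvg_at_right_filter.
  case: (isd_QQ b L r a0 b0 u L0 ub r0) => /derivable1_diffP /differentiable_continuous h _.
  exact: h.
- have [_ _ h2] := (continuous_within_itvP _ ub).1 (psi_cont b L (r + 2) u L0 ub uL (ler_wpDl r0 (ler1n R 2))).
  have [_ _ h1] := (continuous_within_itvP _ ub).1 (psi_cont b L (r + 1) u L0 ub uL (ler_wpDl r0 (lexx 1))).
  have ht : (fun y => (b - y) / L) @ b^'- --> (b - b) / L.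
    apply: cvg_at_left_filter; apply: cvgM; last exact: cvg_cst.
    apply: cvgB; [exact: cvg_cst | exact: cvg_id].
  rewrite /QQ.
  apply: cvgM; first exact: cvg_cst.
  apply: cvgD.
    apply: cvgM; first exact: cvg_cst.
    apply: cvgB.
      apply: cvgM; first exact: cvg_cst.
      exact: (cvgM ht ht).
    apply: cvgM; first exact: cvg_cst.
    exact: ht.
  apply: cvgM; first exact: cvg_cst.
  apply: cvgB.
    apply: cvgM; first exact: cvg_cst.
    exact: h2.
  apply: cvgM; first exact: cvg_cst.
  exact: h1.
Qed.
Lemma half_pow (e : R) : (2^-1 : R) `^ e = (2 `^ e)^-1.
Proof.
have h : (2 * 2^-1 : R) `^ e = 2 `^ e * (2^-1) `^ e.
  by rewrite powRM // ?invr_ge0 // ler0n.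
rewrite mulfV ?pnatr_eq0 // powR1 in h.
have Y0 : (2 : R) `^ e != 0.
  by apply/negP => /eqP/powR_eq0_eq0/eqP; rewrite pnatr_eq0.
by rewrite -(mulKf Y0 ((2^-1) `^ e)) -h mulr1.
Qed.

Lemma core (f : R -> R) (a b r a0 b0 : R) :
  a < b -> 0 <= r ->
  (forall x, a <= x <= b -> derivable f x 1) ->
  (forall x, a < x < b -> `|derive1 f x| <= a0 + b0 * ((b - x) / (b - a)) `^ r) ->
  `| (b - a) / 2 * (f a + f b) - \int[mu]_(x in `[a, b]) f x |
   <= QQ b (b - a) r a0 b0 a - 2 * QQ b (b - a) r a0 b0 ((a + b) / 2) + QQ b (b - a) r a0 b0 b.
Proof.
move=> ab r0 df bd.
set L := b - a.
have L0 : 0 < L by rewrite subr_gt0.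
set c := (a + b) / 2.
have ac : a < c by rewrite /c ltr_pdivlMr // mulrDr mulr1 ltrD2l.
have cb : c < b by rewrite /c ltr_pdivrMr // mulrDr mulr1 ltrD2r.
pose Fi := fun x => \int[mu]_(t in `[a, x]) f t.
have cf : {within `[a, b], continuous f}.
  apply: derivable_within_continuous => x; rewrite in_itv /=; exact: df.
have intf : mu.-integrable `[a, b] (EFin \o f).
  exact: continuous_compact_integrable (@segment_compact _ a b) cf.
have dFi : forall x, a < x < b -> is_derive x 1 Fi (f x).
  move=> x /andP [ax xb].
  have fx : {for x, continuous f}.
    apply/differentiable_continuous; rewrite -derivable1_diffP.
    by apply: df; rewrite !ltW.
  have [d e] := continuous_FTC1_closed xb intf ax fx.
  by split; [exact: d | rewrite -derive1E].
have cFi : {within `[a, b], continuous Fi}.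
  exact: parameterized_integral_continuous (ltW ab) intf.
have Fia : Fi a = 0 by rewrite /Fi set_itv1 Rintegral_set1.
pose H := fun x => a0 + b0 * ((b - x) / L) `^ r.
pose dG2 := fun x => L * (2^-1 - (b - x) / L) * H x.
have dG2E : forall x, L * (2^-1 - (b - x) / L) = x - c.
  move=> x; rewrite /c /L; field; by rewrite gt_eqF // subr_gt0.
have key : forall s, `|s| <= 1 ->
    s * (L / 2 * (f a + f b) - Fi b) <= QQ b L r a0 b0 a - 2 * QQ b L r a0 b0 c + QQ b L r a0 b0 b.
  move=> s hs.
  have sub1 : forall u v : R, a <= u -> v <= b -> `[u, v] `<=` `[a, b].
    by move=> u v au vb; apply: subset_itv; rewrite bnd_simp.
  have P2 : s * ((b - c) * f b - Fi b) - QQ b L r a0 b0 b <=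
            s * ((c - c) * f c - Fi c) - QQ b L r a0 b0 c.
    apply: (piece f Fi (QQ b L r a0 b0) dG2 c c b s cb hs).
    - move=> x /andP [cx xb]; apply: df; rewrite (ltW xb) andbT; exact: ltW (lt_trans ac cx).
    - move=> x /andP [cx xb]; apply: dFi; rewrite xb andbT; exact: lt_trans ac cx.
    - move=> x /andP [cx xb]; exact: isd_QQ b L r a0 b0 x L0 xb r0.
    - move=> x /andP [cx xb]; rewrite /dG2 dG2E gtr0_norm ?subr_gt0 //.
      apply: ler_wpM2l; first by rewrite subr_ge0 ltW.
      apply: bd; rewrite xb andbT; exact: lt_trans ac cx.
    - apply: wcomb => //.
      + exact: continuous_subspaceW (sub1 _ _ (ltW ac) (lexx b)) cf.
      + exact: continuous_subspaceW (sub1 _ _ (ltW ac) (lexx b)) cFi.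
      + apply: QQ_cont => //; rewrite /L opprB addrC subrK; exact: ltW.
  have P1 : s * ((c - c) * f c - Fi c) - (-1) * QQ b L r a0 b0 c <=
            s * ((a - c) * f a - Fi a) - (-1) * QQ b L r a0 b0 a.
    apply: (piece f Fi (fun y => (-1) * QQ b L r a0 b0 y) (fun y => (-1) * dG2 y) c a c s ac hs).
    - move=> x /andP [ax xc]; apply: df; rewrite (ltW ax) /=; exact: ltW (lt_trans xc cb).
    - move=> x /andP [ax xc]; apply: dFi; rewrite ax /=; exact: lt_trans xc cb.
    - move=> x /andP [ax xc]; apply: isdZ; exact: isd_QQ b L r a0 b0 x L0 (lt_trans xc cb) r0.
    - move=> x /andP [ax xc]; rewrite /dG2 dG2E ltr0_norm ?subr_lt0 // mulrA mulN1r.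
      apply: ler_wpM2l; first by rewrite oppr_ge0 subr_le0 ltW.
      apply: bd; rewrite ax /=; exact: lt_trans xc cb.
    - apply: wcomb => //.
      + exact: continuous_subspaceW (sub1 _ _ (lexx a) (ltW cb)) cf.
      + exact: continuous_subspaceW (sub1 _ _ (lexx a) (ltW cb)) cFi.
      + apply: derivable_within_continuous => x; rewrite in_itv /= => /andP [_ xc].
        have [h _] := isdZ (-1) (isd_QQ b L r a0 b0 x L0 (le_lt_trans xc cb) r0).
        exact: h.
  have bc : b - c = L / 2 by rewrite /c /L; field.
  have ac' : a - c = - (L / 2) by rewrite /c /L; field.
  move: P1 P2; rewrite bc ac' Fia subrr !mul0r.
  move=> h1 h2; have h := lerD h1 h2.
  rewrite -subr_le0; rewrite -subr_le0 in h.
  set A := (X in X <= 0); set B := (X in X <= 0) in h.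
  suff -> : A = B by [].
  rewrite /A /B; ring.
have k1 : 1 * (L / 2 * (f a + f b) - Fi b) <= QQ b L r a0 b0 a - 2 * QQ b L r a0 b0 c + QQ b L r a0 b0 b.
  by apply: key; rewrite normr1.
have k2 : (-1) * (L / 2 * (f a + f b) - Fi b) <= QQ b L r a0 b0 a - 2 * QQ b L r a0 b0 c + QQ b L r a0 b0 b.
  by apply: key; rewrite normrN normr1.
rewrite mul1r in k1; rewrite mulN1r in k2.
rewrite ler_norml; apply/andP; split; [rewrite lerNl; exact: k2 | exact: k1].
Qed.
Lemma W_val (a b r a0 b0 : R) : a < b -> 0 <= r ->
  QQ b (b - a) r a0 b0 a - 2 * QQ b (b - a) r a0 b0 ((a + b) / 2) + QQ b (b - a) r a0 b0 b
  = (b - a) ^+ 2 * (a0 / 4 + b0 * ((1 + 2 `^ r * r) / (2 `^ r * (r + 1) * (r + 2))) / 2).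
Proof.
move=> ab r0.
have L0 : b - a != 0 by rewrite subr_eq0 gt_eqF.
have r1 : r + 1 != 0 by rewrite gt_eqF // ltr_wpDl.
have r2 : r + 2 != 0 by rewrite gt_eqF // ltr_wpDl.
have t1 : (b - a) / (b - a) = 1 by rewrite divff.
have t2 : (b - (a + b) / 2) / (b - a) = 2^-1 by field.
have t0 : (b - b) / (b - a) = 0 by rewrite subrr mul0r.
rewrite /QQ t1 t2 t0 !powR1 !powR0 // !half_pow.
have two0 : (2 : R) != 0 by rewrite pnatr_eq0.
have e2 : (2 : R) `^ (r + 2) = 2 `^ r * 4.
  rewrite powRD; last by rewrite two0 implybT.
  by rewrite powR_mulrn ?ler0n // expr2; congr (_ * _); rewrite -natrM.
have e1 : (2 : R) `^ (r + 1) = 2 `^ r * 2.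
  rewrite powRD; last by rewrite two0 implybT.
  by rewrite powRr1 ?ler0n.
rewrite e1 e2.
have u0 : (2 : R) `^ r != 0 by rewrite gt_eqF // powR_gt0 // ltr0n.
set u := (2 : R) `^ r.
field.
by rewrite u0 r1 r2.
Qed.
Lemma eqle (x y : R) : x = y -> x <= y. Proof. by move=> ->. Qed.
Lemma aux (L p e : R) : L != 0 -> p != 0 -> L / (4 * p) * (4 * p * e / L) = e.
Proof. by move=> h1 h2; field; rewrite h1 h2. Qed.
Lemma thm (I : set R) (f : R -> R) (a b s alpha m q : R) :
  is_interval I ->
  (forall x, I° x -> derivable f x 1) ->
  I° a -> I° b -> a < b ->
  (lebesgue_measure : measure _ R).-integrable `[a, b] (EFin \o (derive1 f)) ->
  0 < s <= 1 -> 0 <= alpha <= 1 -> 0 < m <= 1 ->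
  I° (b / m) -> 1 < q ->
  s_alpha_m_convex s alpha m I° (fun x => `|(derive1 f) x| `^ q) a b ->
  let p := q / (q - 1) in
  let v1 := (1 + 2 `^ (alpha * s) * (alpha * s)) /
            (2 `^ (alpha * s) * (alpha * s + 1) * (alpha * s + 2)) in
  let v2 := m * (2^-1 - v1) in
  `| (f a + f b) / 2 - (b - a)^-1 * \int[lebesgue_measure]_(x in `[a, b]) f x |
    <= (b - a) / 2 `^ ((p + 1) / p) *
       (v1 * `|(derive1 f) a| `^ q + v2 * `|(derive1 f) (b / m)| `^ q) `^ q^-1.

Proof.
move=> Iint dfI Ia Ib ab intf' /andP[s0 s1] /andP[al0 al1] /andP[m0 m1] Ibm q1 [_ cvx].
cbv zeta.
set p := q / (q - 1).
set r := alpha * s.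
set v1 := (1 + 2 `^ r * r) / (2 `^ r * (r + 1) * (r + 2)).
set v2 := m * (2^-1 - v1).
have r0 : 0 <= r by rewrite mulr_ge0 // ltW.
have L0 : 0 < b - a by rewrite subr_gt0.
have sub : forall x, a <= x <= b -> I° x.
  move=> x /andP[ax xb].
  case: (eqVneq x a) => [-> |xa]; first exact: Ia.
  case: (eqVneq x b) => [-> |xb']; first exact: Ib.
  have ax' : a < x by rewrite lt_neqAle eq_sym xa ax.
  have xb2 : x < b by rewrite lt_neqAle xb' xb.
  have IaI : I a := nbhs_singleton Ia.
  have IbI : I b := nbhs_singleton Ib.
  rewrite /interior.
  apply: (@filterS _ _ _ [set` `]a, b[]).
    move=> z /=; rewrite in_itv /= => /andP [az zb].
    by apply: (Iint a b IaI IbI); rewrite !ltW.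
  apply: open_nbhs_nbhs; split; first exact: interval_open.
  by rewrite /= in_itv /= ax' xb2.
have df : forall x, a <= x <= b -> derivable f x 1 := fun x h => dfI x (sub x h).
set A := `|derive1 f a| `^ q.
set B := `|derive1 f (b / m)| `^ q.
have q0 : 0 < q by apply: lt_trans q1.
have qn1 : q - 1 != 0 by rewrite subr_eq0 gt_eqF.
have p0 : 0 < p by rewrite /p divr_gt0 // subr_gt0.
have qp : q^-1 + p^-1 = 1 by rewrite /p; field; rewrite qn1 gt_eqF.
have gen : forall y, 0 < y ->
    `|(f a + f b) / 2 - (b - a)^-1 * \int[mu]_(x in `[a, b]) f x|
      <= (b - a) / (4 * y) * (2 * (v1 * A + v2 * B) / q + y `^ p / p).
  move=> y y0.
  pose a0 := (m * B / q + y `^ p / p) / y.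
  pose b0 := (A - m * B) / (q * y).
  have bd : forall x, a < x < b -> `|derive1 f x| <= a0 + b0 * ((b - x) / (b - a)) `^ r.
    move=> x /andP [ax xb].
    set t := (b - x) / (b - a).
    have t0 : 0 <= t by rewrite divr_ge0 // ltW // subr_gt0.
    have t1 : t <= 1 by rewrite ler_pdivrMr // mul1r lerD2l lerN2 ltW.
    have xe : t * a + (1 - t) * b = x by rewrite /t; field; rewrite gt_eqF.
    have hc : `|derive1 f (t * a + (1 - t) * b)| `^ q <=
      t `^ r * A + m * (1 - t `^ r) * B.
      apply: (cvx a b t) => //.
      - by rewrite lexx ltW.
      - by rewrite lexx ltW.
      - by rewrite t0 t1.
    rewrite xe in hc.
    have yg := conjugate_powR (normr_ge0 (derive1 f x)) (ltW y0) q0 p0 qp.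
    have h1 : `|derive1 f x| <= (`|derive1 f x| `^ q / q + y `^ p / p) / y.
      by rewrite ler_pdivlMr.
    apply: le_trans h1 _.
    have yne : y != 0 by rewrite gt_eqF.
    have qne : q != 0 by rewrite gt_eqF.
    have -> : a0 + b0 * t `^ r = ((t `^ r * A + m * (1 - t `^ r) * B) / q + y `^ p / p) / y.
      rewrite /a0 /b0; field.
      by rewrite yne qne (gt_eqF p0).
    rewrite ler_pM2r ?invr_gt0 // lerD2r ler_pM2r ?invr_gt0 //.
  have C := core f a b r a0 b0 ab r0 df bd.
  rewrite W_val // -/v1 in C.
  have Lne : b - a != 0 by rewrite gt_eqF.
  have -> : (f a + f b) / 2 - (b - a)^-1 * \int[mu]_(x in `[a, b]) f x =
      (b - a)^-1 * ((b - a) / 2 * (f a + f b) - \int[mu]_(x in `[a, b]) f x).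
    by field.
  rewrite normrM gtr0_norm ?invr_gt0 //.
  have iL : 0 <= (b - a)^-1 by rewrite invr_ge0 ltW.
  apply: le_trans (ler_wpM2l iL C) _.
  have yne : y != 0 by rewrite gt_eqF.
  have qne : q != 0 by rewrite gt_eqF.
  suff -> : (b - a)^-1 * ((b - a) ^+ 2 * (a0 / 4 + b0 * v1 / 2)) =
    (b - a) / (4 * y) * (2 * (v1 * A + v2 * B) / q + y `^ p / p) by [].
  rewrite /a0 /b0 /v2; field.
  by rewrite yne qne (gt_eqF p0) Lne.
set V := v1 * A + v2 * B.
have Lne : b - a != 0 by rewrite gt_eqF.
have pne : p != 0 by rewrite gt_eqF.
have qne : q != 0 by rewrite gt_eqF.
case: (lerP V 0) => hV.
  apply: (@le_trans _ _ 0); last first.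
    by rewrite mulr_ge0 ?powR_ge0 // divr_ge0 ?powR_ge0 // ltW.
  apply/ler_addgt0Pr => e e0; rewrite add0r.
  have p1 : 0 < p - 1 by rewrite /p subr_gt0 ltr_pdivlMr ?subr_gt0 // mul1r ltrBlDr ltrDl.
  pose d := 4 * p * e / (b - a).
  have d0 : 0 < d by rewrite /d divr_gt0 // mulr_gt0 // mulr_gt0.
  pose y := d `^ (p - 1)^-1.
  have y0 : 0 < y by rewrite powR_gt0.
  apply: le_trans (gen y y0) _.
  have hy : y `^ p / y = d.
    have -> : y `^ p / y = y `^ (p - 1).
      rewrite powRB ?powRr1 ?(ltW y0) //.
      by rewrite (gt_eqF y0) implybT.
    by rewrite /y -powRrM mulVf ?gt_eqF // powRr1 // ltW.
  apply: (@le_trans _ _ ((b - a) / (4 * y) * (y `^ p / p))).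
    rewrite ler_pM2l ?divr_gt0 ?mulr_gt0 // gerDr.
    apply: mulr_le0_ge0; last by rewrite invr_ge0 ltW.
    by apply: mulr_ge0_le0 => //; exact: ler0n.
  have -> : (b - a) / (4 * y) * (y `^ p / p) = (b - a) / (4 * p) * (y `^ p / y).
    by field; rewrite ?Lne ?pne ?(gt_eqF y0).
  rewrite hy /d; apply: eqle.
  exact: aux.
pose y := (2 * V) `^ p^-1.
have V2 : 0 < 2 * V by rewrite mulr_gt0.
have y0 : 0 < y by rewrite powR_gt0.
apply: le_trans (gen y y0) _.
have hy : y `^ p = 2 * V by rewrite /y -powRrM mulVf // powRr1 // ltW.
have h2V : 2 * V / y = 2 `^ q^-1 * V `^ q^-1.
  have -> : q^-1 = 1 - p^-1 by rewrite -qp addrK.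
  rewrite -powRM ?ler0n ?ltW // powRB; last by rewrite (gt_eqF V2) implybT.
  by rewrite powRr1 // ltW.
have W0 : (2 : R) `^ q^-1 != 0 by rewrite gt_eqF // powR_gt0 // ltr0n.
have h4 : (2 : R) `^ ((p + 1) / p) = 4 / 2 `^ q^-1.
  have -> : (p + 1) / p = 2 - q^-1.
    rewrite /p; field; by rewrite ?qn1 ?qne.
  rewrite powRB; last by rewrite pnatr_eq0 implybT.
  by rewrite powR_mulrn ?ler0n // expr2 -natrM.
rewrite hy.
have -> : (b - a) / (4 * y) * (2 * V / q + 2 * V / p) = (b - a) / 4 * (2 * V / y) * (q^-1 + p^-1).
  by field; rewrite (gt_eqF y0) qne pne.
rewrite qp mulr1 h2V h4; apply: eqle; field.
by rewrite W0.
Qed.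
End Helpers.

Theorem theorem3 (R : realType) (I : set R) (f : R -> R) (a b s alpha m q : R) :
  is_interval I ->
  (forall x, I° x -> derivable f x 1) ->
  I° a -> I° b -> a < b ->
  (lebesgue_measure : measure _ R).-integrable `[a, b] (EFin \o (derive1 f)) ->
  0 < s <= 1 -> 0 <= alpha <= 1 -> 0 < m <= 1 ->
  I° (b / m) -> 1 < q ->
  s_alpha_m_convex s alpha m I° (fun x => `|(derive1 f) x| `^ q) a b ->
  let p := q / (q - 1) in
  let v1 := (1 + 2 `^ (alpha * s) * (alpha * s)) /
            (2 `^ (alpha * s) * (alpha * s + 1) * (alpha * s + 2)) in
  let v2 := m * (2^-1 - v1) in
  `| (f a + f b) / 2 - (b - a)^-1 * \int[lebesgue_measure]_(x in `[a, b]) f x |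
    <= (b - a) / 2 `^ ((p + 1) / p) *
       (v1 * `|(derive1 f) a| `^ q + v2 * `|(derive1 f) (b / m)| `^ q) `^ q^-1.
Proof. exact: thm. Qed.
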